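(* Let $\gamma\ge2$ be an integer, $\varepsilon\ge0$, and $P_0$ a probability measure on $\mathbb{R}^n$. For $P\in N_\gamma(P_0)$ define: (i) $\mathbf{Q}^\star_\varepsilon(P)$ as the probability measure $Q\ll P_0$ with $\frac{dQ}{dP_0}(x)=\mathrm{clip}\big(\frac1{r_P}\frac{dP}{dP_0}(x);\frac{\gamma+1}{\gamma+e^\varepsilon},\frac{(\gamma+1)e^\varepsilon}{\gamma+e^\varepsilon}\big)$, where $r_P>0$ is chosen so that $Q$ has total mass $1$; (ii) $\mathbf{Q}^\star_{g_\varepsilon}(P)=\lambda P+(1-\lambda)P_0$ with $\lambda=\frac{e^\varepsilon-1}{(1-\frac1\gamma)e^\varepsilon+\gamma-1}=\frac{\gamma(e^\varepsilon-1)}{(\gamma-1)(e^\varepsilon+\gamma)}$. Then for every $f$-divergence $D_f$ and every $P\in N_\gamma(P_0)$, $D_f(P\|\mathbf{Q}^\star_\varepsilon(P))\le D_f(P\|\mathbf{Q}^\star_{g_\varepsilon}(P))$.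
   Context: $\mathrm{clip}(x;s_1,s_2)=\max\{s_1,\min\{s_2,x\}\}$. For $\gamma\ge1$, $E_\gamma(P\|Q)=\mathbb{E}_Q[\max\{\frac{dP}{dQ}-\gamma,0\}]$ and $N_\gamma(P_0)=\{P:E_\gamma(P\|P_0)=E_\gamma(P_0\|P)=0\}$, equivalently the $P\ll P_0$ with $\frac1\gamma\le\frac{dP}{dP_0}\le\gamma$. $D_f(P\|Q)=\int qf(p/q)\,d\nu$ for convex $f:(0,\infty)\to\mathbb{R}$ with $f(1)=0$, densities w.r.t. a dominating measure $\nu$, conventions $f(0)=\lim_{t\to0^+}f(t)$, $0f(0/0)=0$, $0f(a/0)=a\lim_{u\to\infty}f(u)/u$. (In the paper these two maps are, on $N_\gamma(P_0)$, the locally minimax-optimal $\varepsilon$-LDP sampler and the locally minimax-optimal $g_\varepsilon$-FLDP mixture sampler.) *)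

(* Defs.v *)
From HB Require Import structures.
From mathcomp Require Import all_boot all_order all_algebra.
From mathcomp Require Import all_classical all_reals all_analysis.
Set Implicit Arguments. Unset Strict Implicit. Unset Printing Implicit Defensive.
Import Order.TTheory GRing.Theory Num.Theory.
Import numFieldNormedType.Exports.
Local Open Scope classical_set_scope.
Local Open Scope ring_scope.

Definition clip (R : realType) (x s1 s2 : R) : R := Num.max s1 (Num.min s2 x).

Definition convex_pos (R : realType) (f : R -> R) : Prop :=
  forall x y t : R, 0 < x -> 0 < y -> 0 <= t <= 1 ->
    f (t * x + (1 - t) * y) <= t * f x + (1 - t) * f y.

Definition is_density (d : measure_display) (T : measurableType d) (R : realType)
  (P0 P : set T -> \bar R) (p : T -> R) : Prop :=
  measurable_fun setT p /\
  forall A, measurable A -> P A = (\int[P0]_(x in A) (p x)%:E)%E.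

(* pointwise integrand q f(p/q) with the conventions
   f(0) = lim_{t->0+} f t, 0 f(0/0) = 0, 0 f(a/0) = a lim_{u->oo} f(u)/u *)
Definition fdiv_integrand (R : realType) (f : R -> R) (p q : R) : \bar R :=
  if 0 < q then
    (if 0 < p then (q * f (p / q))%:E
     else (q%:E * lim ((f t)%:E @[t --> 0^'+]))%E)
  else if 0 < p then (p%:E * lim ((f u / u)%:E @[u --> +oo%R]))%E
  else 0%E.

(* D_f(P || Q) for densities p = dP/dnu, q = dQ/dnu w.r.t. dominating nu *)
Definition fdiv (d : measure_display) (T : measurableType d) (R : realType)
  (nu : set T -> \bar R) (f : R -> R) (p q : T -> R) : \bar R :=
  (\int[nu]_x fdiv_integrand f (p x) (q x))%E.

(* density dQ*_eps(P)/dP0 given the normalising constant r *)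
Definition qstar_eps (T : Type) (R : realType) (gamma eps r : R) (p : T -> R) : T -> R :=
  fun x => clip (p x / r) ((gamma + 1) / (gamma + expR eps))
                          ((gamma + 1) * expR eps / (gamma + expR eps)).

Definition lambda_g (R : realType) (gamma eps : R) : R :=
  (expR eps - 1) / ((1 - gamma^-1) * expR eps + gamma - 1).

(* density d(lambda P + (1 - lambda) P0)/dP0 *)
Definition qstar_g (T : Type) (R : realType) (gamma eps : R) (p : T -> R) : T -> R :=
  fun x => lambda_g gamma eps * p x + (1 - lambda_g gamma eps).

(* Main.v *)
Require Import Defs.
From mathcomp Require Import all_boot all_order all_algebra.
From mathcomp Require Import all_classical all_reals all_analysis.
From mathcomp Require Import ring lra measurable_realfun.
Import Order.TTheory GRing.Theory Num.Theory.
Import numFieldNormedType.Exports.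
Local Open Scope classical_set_scope.
Local Open Scope ring_scope.

Section Chord.
Variable R : realType.
Variable f : R -> R.
Hypothesis hf : convex_pos f.

Lemma chord x z y : 0 < x -> 0 < z -> x != z ->
  (x <= y <= z) || (z <= y <= x) ->
  f y <= f x + (y - x) / (z - x) * (f z - f x).
Proof.
move=> x0 z0 xz hy.
have zx0 : z - x != 0 by rewrite subr_eq0 eq_sym.
set t := (z - y) / (z - x).
have ht : 0 <= t <= 1.
  rewrite /t; case/orP: hy => /andP[h1 h2].
  - have zx : 0 < z - x by rewrite subr_gt0 lt_neqAle xz (le_trans h1 h2).
    apply/andP; split; first by apply: divr_ge0; lra.
    by rewrite ler_pdivrMr // mul1r; lra.
  - have zx : 0 < x - z by rewrite subr_gt0 lt_neqAle eq_sym xz (le_trans h1 h2).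
    rewrite -(divrNN (z - y)) !opprB.
    apply/andP; split; first by apply: divr_ge0; lra.
    by rewrite ler_pdivrMr // mul1r; lra.
have := hf _ _ _ x0 z0 ht.

have -> : t * x + (1 - t) * z = y by rewrite /t; field.
have -> : t * f x + (1 - t) * f z = f x + (y - x) / (z - x) * (f z - f x).
  by rewrite /t; field.
by [].
Qed.


End Chord.

Section Conv.
Variable R : realType.
Variable f : R -> R.
Hypothesis hf : convex_pos f.

Lemma three_slope x r y : 0 < x -> x < r -> r < y ->
  (f r - f x) / (r - x) <= (f y - f r) / (y - r).
Proof.
move=> x0 xr ry.
have y0 : 0 < y by lra.
have xy : x != y by rewrite lt_eqF //; lra.
have h : f r <= f x + (r - x) / (y - x) * (f y - f x).
  by apply: (@chord _ _ hf) => //; rewrite (ltW xr) (ltW ry).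
have rx : 0 < r - x by lra.
have yr : 0 < y - r by lra.
have yx : 0 < y - x by lra.
rewrite ler_pdivrMr // mulrAC ler_pdivlMr //.
move: h; set A := f r; set B := f x; set C := f y => h.
have h2 : (A - B) * (y - x) <= (r - x) * (C - B).
  by rewrite -ler_pdivlMr // mulrAC; lra.
nra.
Qed.

Lemma subgrad r : 0 < r -> exists d, forall y, 0 < y -> f r + d * (y - r) <= f y.
Proof.
move=> r0.
pose S := [set s | exists2 x, 0 < x < r & s = (f r - f x) / (r - x)].
have S0 : S !=set0.
  exists ((f r - f (r / 2)) / (r - r / 2)); exists (r / 2) => //; apply/andP; split; lra.
have ubS y : r < y -> ubound S ((f y - f r) / (y - r)).
  move=> ry _ [x /andP[x0 xr] ->]; exact: three_slope.
have hS : has_sup S by split => //; exists ((f (r + 1) - f r) / (r + 1 - r)); apply: ubS; lra.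
exists (sup S) => y y0.
have [yr|ry|->] := ltgtP y r; last by rewrite subrr mulr0 addr0.
- have : (f r - f y) / (r - y) <= sup S.
    by apply: sup_upper_bound => //; exists y => //; apply/andP; split.
  rewrite ler_pdivrMr ?subr_gt0 // => h; nra.
- have : sup S <= (f y - f r) / (y - r) by apply: ge_sup => //; exact: ubS.
  rewrite ler_pdivlMr ?subr_gt0 // => h; nra.
Qed.

Lemma aux (u F c : R) : 0 <= u -> 0 < c -> u / c * F <= `|F| / c * u.
Proof.
move=> u0 c0; have ic : 0 <= c^-1 by rewrite invr_ge0 ltW.
have h : 0 <= u * c^-1 by rewrite mulr_ge0.
have := ler_norm F; nra.
Qed.

Lemma cont_pos x0 : 0 < x0 -> {for x0, continuous f}.
Proof.
move=> x00; have [d hd] := @subgrad x0 x00.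
pose K := `|d| + `|f (2 * x0) - f x0| / x0 + 2 * `|f (x0 / 2) - f x0| / x0.
have K0 : 0 <= K.
  have t1 : 0 <= `|f (2 * x0) - f x0| / x0 by rewrite divr_ge0 // ltW.
  have t2 : 0 <= `|f (x0 / 2) - f x0| / x0 by rewrite divr_ge0 // ltW.
  have t3 : 0 <= `|d| by [].
  rewrite /K -mulrA; lra.
have bnd y : x0 / 2 <= y <= 2 * x0 -> `|f y - f x0| <= K * `|y - x0|.
  move=> /andP[y1 y2].
  have y0 : 0 < y by lra.
  have lo : - (`|d| * `|y - x0|) <= f y - f x0.
    have := hd y y0; have := ler_norm (- (d * (y - x0))); rewrite normrN normrM.
    lra.
  have up : f y - f x0 <= (`|f (2 * x0) - f x0| / x0 + 2 * `|f (x0 / 2) - f x0| / x0) * `|y - x0|.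
    have [yx|xy] := leP x0 y.
    + have h : f y <= f x0 + (y - x0) / (2 * x0 - x0) * (f (2 * x0) - f x0).
        have h2x : 0 < 2 * x0 by lra.
        have hne : x0 != 2 * x0 by rewrite lt_eqF //; lra.
        by apply: (@chord _ _ hf) => //; rewrite yx y2.
      rewrite (_ : 2 * x0 - x0 = x0) in h; last by ring.
      have e1 : (y - x0) / x0 * (f (2 * x0) - f x0) <= `|f (2 * x0) - f x0| / x0 * `|y - x0|.
        by rewrite ger0_norm ?subr_ge0 //; apply: aux => //; rewrite subr_ge0.
      have e2 : 0 <= 2 * `|f (x0 / 2) - f x0| / x0 * `|y - x0|.
        have ix : 0 <= x0^-1 by rewrite invr_ge0 ltW.
        by do ! apply: mulr_ge0 => //.
      rewrite mulrDl; lra.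
    + have h : f y <= f x0 + (y - x0) / (x0 / 2 - x0) * (f (x0 / 2) - f x0).
        have h2x : 0 < x0 / 2 by lra.
        have hne : x0 != x0 / 2 by rewrite gt_eqF //; lra.
        by apply: (@chord _ _ hf) => //; rewrite y1 (ltW xy) orbT.
      rewrite (_ : (y - x0) / (x0 / 2 - x0) = 2 * (x0 - y) / x0) in h; last first.
        by field; rewrite gt_eqF //= lt_eqF //; lra.
      have e1 : 2 * (x0 - y) / x0 * (f (x0 / 2) - f x0) <= 2 * `|f (x0 / 2) - f x0| / x0 * `|y - x0|.
        have xy' : 0 <= x0 - y by lra.
        have h3 := @aux (x0 - y) (f (x0 / 2) - f x0) x0 xy' x00.
        rewrite ltr0_norm ?subr_lt0 // opprB; lra.
      have e2 : 0 <= `|f (2 * x0) - f x0| / x0 * `|y - x0|.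
        have ix : 0 <= x0^-1 by rewrite invr_ge0 ltW.
        by do ! apply: mulr_ge0 => //.
      rewrite mulrDl; lra.
  have e3 : 0 <= (`|f (2 * x0) - f x0| / x0 + 2 * `|f (x0 / 2) - f x0| / x0) * `|y - x0|.
    have ix : 0 <= x0^-1 by rewrite invr_ge0 ltW.
    apply: mulr_ge0 => //; apply: addr_ge0; by do ! apply: mulr_ge0 => //.
  have e4 : 0 <= `|d| * `|y - x0| by rewrite mulr_ge0.
  rewrite /K -addrA mulrDl ler_norml; apply/andP; split; lra.
apply/cvgrPdist_lt => e e0.
apply/nbhs_normP; exists (Num.min (x0 / 2) (e / (K + 1))).
  rewrite /= lt_min; apply/andP; split; [lra | apply: divr_gt0 => //; lra].
move=> y; rewrite /ball_ /= lt_min => /andP[h1 h2].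
have hy : x0 / 2 <= y <= 2 * x0.
  move: h1; rewrite ltr_distlC => /andP[h3 h4]; apply/andP; split; lra.
rewrite distrC; apply: (le_lt_trans (bnd y hy)).
rewrite distrC in h2.
have : K * `|y - x0| <= K * (e / (K + 1)) by apply: ler_wpM2l => //; exact: ltW.
have : K * (e / (K + 1)) < e.
  rewrite mulrA ltr_pdivrMr; last lra.
  nra.
lra.
Qed.

Lemma meas_f : measurable_fun (`]0, +oo[%classic : set R) f.
Proof.
apply: measurable_realfun.open_continuous_measurable_fun; first exact: interval_open.
by move=> x; rewrite inE /= in_itv /= andbT => x0; exact: cont_pos.
Qed.

Lemma persp (p : R) : 0 < p -> convex_pos (fun q => q * f (p / q)).
Proof.
move=> p0 x y t x0 y0 /andP[t0 t1].
pose m := t * x + (1 - t) * y.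
have m0 : 0 < m.
  have [tx|tx] := leP t 0.
    rewrite /m; have -> : t = 0 by lra.
    by rewrite mul0r add0r subr0 mul1r.
  have : 0 <= (1 - t) * y by rewrite mulr_ge0 ?subr_ge0 // ltW.
  have : 0 < t * x by rewrite mulr_gt0.
  rewrite /m; lra.
pose s := t * x / m.
have hs : 0 <= s <= 1.
  have h1 : 0 <= (1 - t) * y by rewrite mulr_ge0 ?subr_ge0 // ltW.
  have h2 : 0 <= t * x by rewrite mulr_ge0 // ltW.
  rewrite /s; apply/andP; split; first by rewrite divr_ge0 // ltW.
  by rewrite ler_pdivrMr // mul1r /m; lra.
have px : 0 < p / x by rewrite divr_gt0.
have py : 0 < p / y by rewrite divr_gt0.
have := hf _ _ _ px py hs.
have -> : s * (p / x) + (1 - s) * (p / y) = p / m.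
  rewrite /s /m; field.
  by rewrite gt_eqF // gt_eqF // gt_eqF // (m0 : 0 < t * x + (1 - t) * y).
move=> h.
have := ler_wpM2l (ltW m0) h.
have -> : m * (s * f (p / x) + (1 - s) * f (p / y)) =
   t * (x * f (p / x)) + (1 - t) * (y * f (p / y)).
  rewrite /s /m; field; by rewrite gt_eqF // (m0 : 0 < t * x + (1 - t) * y).
by [].
Qed.

Lemma core (r a b p q d : R) : 0 < r -> 0 < a -> a <= b -> 0 < p -> a <= q <= b ->
  (forall y, 0 < y -> f r + d * (y - r) <= f y) ->
  clip (p / r) a b * f (p / clip (p / r) a b) - (f r - d * r) * clip (p / r) a b
  <= q * f (p / q) - (f r - d * r) * q.
Proof.
move=> r0 a0 ab p0 /andP[aq qb] hd.
pose c := f r - d * r.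
pose phi z := z * f (p / z) - c * z - d * p.
have phi0 z : 0 < z -> 0 <= phi z.
  move=> z0; have := hd _ (divr_gt0 p0 z0).
  move=> h; have := ler_wpM2l (ltW z0) h.
  have -> : z * (f r + d * (p / z - r)) = c * z + d * p.
    by rewrite /c; field; rewrite gt_eqF.
  by rewrite /phi; lra.
have cphi : convex_pos phi.
  move=> x y t x0 y0 ht.
  have := @persp p p0 x y t x0 y0 ht; rewrite /phi; lra.
have qs0 : 0 < p / r by rewrite divr_gt0.
have phis : phi (p / r) = 0.
  rewrite /phi /c /=.
  have -> : p / (p / r) = r by field; rewrite !gt_eqF.
  by field; rewrite gt_eqF.
suff : phi (clip (p / r) a b) <= phi q by rewrite /phi /c; lra.
have q0 : 0 < q by lra.
have mono z : 0 < z -> z != p / r -> (p / r <= z <= q) || (q <= z <= p / r) -> phi z <= phi q.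
  move=> z0 zs hz.
  have [->|zq] := eqVneq z q; first by [].
  have qs : p / r != q.
    by apply: contraNneq zq => qs; move: hz; rewrite -qs => /orP[] /andP[h1 h2]; apply/eqP; apply: le_anti; rewrite ?h1 ?h2.
  have := @chord _ _ cphi _ _ _ qs0 q0 qs hz.
  rewrite phis add0r subr0.
  have hq := phi0 q q0.
  have hu : 0 <= (z - p / r) / (q - p / r) <= 1.
    case/orP: hz => /andP[h1 h2].
    - have zx : 0 < q - p / r by rewrite subr_gt0 lt_neqAle qs (le_trans h1 h2).
      apply/andP; split; first by apply: divr_ge0; lra.
      by rewrite ler_pdivrMr // mul1r; lra.
    - have zx : 0 < p / r - q by rewrite subr_gt0 lt_neqAle eq_sym qs (le_trans h1 h2).
      rewrite -(divrNN (z - p / r)) !opprB.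
      apply/andP; split; first by apply: divr_ge0; lra.
      by rewrite ler_pdivrMr // mul1r; lra.
  move: hu; set u := (z - p / r) / (q - p / r) => /andP[u0 u1] h.
  nra.
rewrite /clip.
have [h|h] := leP (p / r) a.
  rewrite (min_idPr (le_trans h ab)) (max_idPl h).
  have [->|hs] := eqVneq a (p / r); first by rewrite phis; apply: phi0.
  by apply: mono => //; rewrite h aq.
have [h'|h'] := leP b (p / r).
  rewrite (max_idPr ab).
  have [->|hs] := eqVneq b (p / r); first by rewrite phis; apply: phi0.
  by apply: mono => //; [lra | rewrite h' qb orbT].
rewrite ?(min_idPr (ltW h')) ?(max_idPr (ltW h)) phis.
exact: phi0.
Qed.

Lemma fbound al be : 0 < al -> al < be ->
  exists M, forall y, al <= y <= be -> `|f y| <= M.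
Proof.
move=> al0 albe; have [d hd] := @subgrad 1 ltr01.
exists (`|f al| + `|f be| + `|f 1| + `|d| * (be + 1)) => y /andP[y1 y2].
have y0 : 0 < y by lra.
have up : f y <= `|f al| + `|f be|.
  have [->|yal] := eqVneq y al; first by have := normr_ge0 (f be); have := ler_norm (f al); lra.
  have h : f y <= f al + (y - al) / (be - al) * (f be - f al).
    apply: (@chord _ _ hf) => //; [exact: (lt_trans al0 albe)| by rewrite lt_eqF | by rewrite y1 y2].
  have hu : 0 <= (y - al) / (be - al) <= 1.
    apply/andP; split; first by apply: divr_ge0; lra.
    by rewrite ler_pdivrMr ?subr_gt0 // mul1r; lra.
  move: hu h; set u := (y - al) / (be - al) => /andP[u0 u1] h.
  have e1 : 0 <= (1 - u) * (`|f al| - f al) by rewrite mulr_ge0 // subr_ge0 ?ler_norm.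
  have e2 : 0 <= u * (`|f be| - f be) by rewrite mulr_ge0 // subr_ge0 ?ler_norm.
  have e3 : 0 <= u * `|f al| by rewrite mulr_ge0.
  have e4 : 0 <= (1 - u) * `|f be| by rewrite mulr_ge0 // subr_ge0.
  lra.
have lo : - (`|f 1| + `|d| * (be + 1)) <= f y.
  have := hd y y0.
  have := ler_norm (- (d * (y - 1))); rewrite normrN normrM.
  have : `|y - 1| <= be + 1.
    by rewrite ler_norml; apply/andP; split; lra.
  have := normr_ge0 d; have := ler_norm (- f 1); rewrite normrN.
  nra.
have := normr_ge0 (f al); have := normr_ge0 (f be); have := normr_ge0 (f 1).
have : 0 <= `|d| * (be + 1) by rewrite mulr_ge0 //; lra.
rewrite ler_norml; move=> *; apply/andP; split; lra.
Qed.

End Conv.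

Set Implicit Arguments. Unset Strict Implicit.

Lemma meas_inv (R : realType) : measurable_fun (`]0, +oo[%classic : set R) (@GRing.inv R).
Proof.
apply: measurable_realfun.open_continuous_measurable_fun; first exact: interval_open.
move=> x; rewrite inE /= in_itv /= andbT => x0; apply: inv_continuous.
by rewrite gt_eqF.
Qed.

Lemma mlt d (T : measurableType d) (R : realType) (h : T -> R) :
  measurable_fun setT h -> measurable_fun setT (fun x => 0 < h x).
Proof. by move=> mh; apply: measurable_fun_ltr => //; exact: measurable_cst. Qed.

Lemma mpre d (T : measurableType d) (R : realType) (h : T -> R) (D : set T) Y :
  measurable D -> measurable_fun setT h ->
  measurable (D `&` ((fun x => 0 < h x) @^-1` Y)).
Proof.
move=> mD mh; have := @mlt d T R h mh measurableT Y I.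
by rewrite setTI => hm; apply: measurableI.
Qed.

Lemma meas_G d (T : measurableType d) (R : realType) (f : R -> R) (p q : T -> R) :
  measurable_fun (`]0,+oo[%classic : set R) f ->
  measurable_fun setT p -> measurable_fun setT q ->
  measurable_fun setT (fun x => fdiv_integrand f (p x) (q x)).
Proof.
move=> mf mp mq; rewrite /fdiv_integrand.
apply: measurable_fun_if => //; first exact: mlt.
- apply: measurable_fun_if => //; first exact: mpre.
  + exact: measurable_funTS (mlt mp).
  + apply/measurable_EFinP; apply: measurable_funM.
      exact: measurable_funTS.
    set D := (_ `&` _ `&` _).
    have mD : measurable D by apply: mpre => //; apply: mpre.
    have sub1 : (fun x => p x / q x) @` D `<=` `]0,+oo[%classic.
      move=> _ [x [[_ /= qx] /= px] <-]; rewrite /= in_itv /= andbT.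
      by rewrite divr_gt0.
    have sub2 : q @` D `<=` `]0,+oo[%classic.
      by move=> _ [x [[_ /= qx] /= px] <-]; rewrite /= in_itv /= andbT.
    have mi : measurable_fun D (fun x => (q x)^-1).
      exact: (measurable_comp (F := (`]0,+oo[%classic : set R)) (measurable_itv _) sub2 (@meas_inv R) (measurable_funTS mq)).
    have mw : measurable_fun D (fun x => p x / q x).
      by apply: measurable_funM => //; exact: measurable_funTS.
    exact: (measurable_comp (F := (`]0,+oo[%classic : set R)) (measurable_itv _) sub1 mf mw).
  + apply: emeasurable_funM; last exact: measurable_cst.
    by apply/measurable_EFinP; exact: measurable_funTS.
- apply: measurable_fun_if => //; first exact: mpre.
  + exact: measurable_funTS (mlt mp).
  + apply: emeasurable_funM; last exact: measurable_cst.
    by apply/measurable_EFinP; exact: measurable_funTS.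
Qed.

Lemma clip_bnd (R : realType) (x s1 s2 : R) : s1 <= s2 -> s1 <= clip x s1 s2 <= s2.
Proof.
move=> s12; rewrite /clip; apply/andP; split; first by rewrite le_max lexx.
by rewrite ge_max s12 ge_min lexx.
Qed.

Lemma clip_id (R : realType) (x s1 s2 : R) : s1 <= x <= s2 -> clip x s1 s2 = x.
Proof.
move=> /andP[h1 h2]; rewrite /clip (min_idPr h2) (max_idPr h1) //.
Qed.

Lemma div_bnd (R : realType) (y z y1 y2 z1 z2 : R) : 0 < y1 -> 0 < z1 ->
  y1 <= y <= y2 -> z1 <= z <= z2 -> y1 / z2 <= y / z <= y2 / z1.
Proof.
move=> y10 z10 /andP[h1 h2] /andP[h3 h4].
have z0 : 0 < z by lra.
have z20 : 0 < z2 by lra.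
apply/andP; split.
- rewrite ler_pdivrMr // mulrAC ler_pdivlMr //; nra.
- rewrite ler_pdivlMr // mulrAC ler_pdivrMr //; nra.
Qed.

Lemma meas_clip d (T : measurableType d) (R : realType) (h : T -> R) (s1 s2 : R) :
  measurable_fun setT h -> measurable_fun setT (fun x => clip (h x) s1 s2).
Proof.
move=> mh; rewrite /clip.
apply: (measurable_maxr (f := cst s1) (g := fun x => Num.min s2 (h x))).
  exact: measurable_cst.
exact: (measurable_minr (f := cst s2) (g := h)).
Qed.

Lemma meas_h d (T : measurableType d) (R : realType) (f : R -> R) (p q : T -> R) :
  measurable_fun (`]0,+oo[%classic : set R) f ->
  measurable_fun setT p -> measurable_fun setT q ->
  (forall x, 0 < p x) -> (forall x, 0 < q x) ->
  measurable_fun setT (fun x => q x * f (p x / q x)).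
Proof.
move=> mf mp mq p0 q0.
apply: measurable_funM => //.
have sub1 : (fun x => p x / q x) @` setT `<=` `]0,+oo[%classic.
  move=> _ [x _ <-]; rewrite /= in_itv /= andbT.
  by rewrite divr_gt0.
have sub2 : q @` setT `<=` `]0,+oo[%classic.
  by move=> _ [x _ <-]; rewrite /= in_itv /= andbT.
have mi : measurable_fun setT (fun x => (q x)^-1).
  exact: (measurable_comp (F := (`]0,+oo[%classic : set R)) (measurable_itv _) sub2 (@meas_inv R) mq).
have mw : measurable_fun setT (fun x => p x / q x).
  by apply: measurable_funM.
exact: (measurable_comp (F := (`]0,+oo[%classic : set R)) (measurable_itv _) sub1 mf mw).
Qed.

Lemma int_bnd d (T : measurableType d) (R : realType) (mu : probability T R)
  (h : T -> R) (B : R) : measurable_fun setT h -> (forall x, `|h x| <= B) ->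
  mu.-integrable setT (EFin \o h).
Proof.
move=> mh hB; apply: measurable_bounded_integrable => //.
  by have := probability_le1 mu measurableT; move=> hl; apply: (le_lt_trans hl); rewrite ltry.
exists B; split; first exact: num_real.
move=> M BM x _ /=; exact: (le_trans (hB x) (ltW BM)).
Qed.

Unset Implicit Arguments. Set Strict Implicit.

Theorem proposition2 (R : realType) (n gamma : nat) (eps : R)
  (P0 P : probability (n.-tuple R) R) (p : n.-tuple R -> R)
  (f : R -> R) (r : R) :
  (2 <= gamma)%N -> 0 <= eps ->
  convex_pos f -> f 1 = 0 ->
  is_density P0 P p ->
  {ae P0, forall x, (gamma%:R)^-1 <= p x <= gamma%:R} ->
  0 < r ->
  (\int[P0]_x (qstar_eps gamma%:R eps r p x)%:E = 1)%E ->
  (fdiv P0 f p (qstar_eps gamma%:R eps r p)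
     <= fdiv P0 f p (qstar_g gamma%:R eps p))%E.
Proof.
move=> hg he hf hf1 [mp hP] hae r0 hint.
rewrite /fdiv /qstar_eps /qstar_g in hint *.
set g := (gamma%:R : R) in hae hint *.
set E := expR eps in hint *.
set a := (g + 1) / (g + E) in hint *.
set b := (g + 1) * E / (g + E) in hint *.
set lam := lambda_g g eps.
have g2 : 2 <= g by rewrite /g (ler_nat R 2 gamma).
have E1 : 1 <= E by have := expR_ge1Dx eps; rewrite -/E; lra.
have gE : 0 < g + E by lra.
have a0 : 0 < a by rewrite /a divr_gt0 //; lra.
have ab : a <= b.
  rewrite /a /b; apply: ler_wpM2r; first by rewrite invr_ge0; lra.
  nra.
have gi0 : 0 < g^-1 by rewrite invr_gt0; lra.
have gi1 : g^-1 < 1 by rewrite invf_lt1 //; lra.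
have D0 : 0 < (1 - g^-1) * E + g - 1.
  have : 0 < (1 - g^-1) * E by rewrite mulr_gt0 //; lra.
  lra.
have lam0 : 0 <= lam by rewrite /lam /lambda_g -/E divr_ge0 //; lra.
have id1 y : lam * y + (1 - lam) - a = lam * (y - g^-1).
  rewrite /lam /lambda_g -/E /a; field.
  by rewrite -/g; apply/and3P; split; apply/eqP => hh; nra.
have id2 y : b - (lam * y + (1 - lam)) = lam * (g - y).
  rewrite /lam /lambda_g -/E /b; field.
  by rewrite -/g; apply/and3P; split; apply/eqP => hh; nra.
have hq2 y : g^-1 <= y <= g -> a <= lam * y + (1 - lam) <= b.
  move=> /andP[y1 y2]; have := id1 y; have := id2 y.
  have : 0 <= lam * (y - g^-1) by rewrite mulr_ge0 // subr_ge0.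
  have : 0 <= lam * (g - y) by rewrite mulr_ge0 // subr_ge0.
  move=> *; apply/andP; split; lra.
pose pt x := clip (p x) g^-1 g.
have ptb x : g^-1 <= pt x <= g by apply: clip_bnd; lra.
have pt0 x : 0 < pt x by have := ptb x; lra.
have mpt : measurable_fun setT pt by exact: meas_clip.
pose q1 x := clip (pt x / r) a b.
have q1b x : a <= q1 x <= b by exact: clip_bnd.
have q10 x : 0 < q1 x by have := q1b x; lra.
have mq1 : measurable_fun setT q1.
  by apply: meas_clip; apply: measurable_funM => //; exact: measurable_cst.
pose q2 x := lam * pt x + (1 - lam).
have q2b x : a <= q2 x <= b by exact: hq2.
have q20 x : 0 < q2 x by have := q2b x; lra.
have mq2 : measurable_fun setT q2.
  apply: measurable_funD; last exact: measurable_cst.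
  by apply: measurable_funM => //; exact: measurable_cst.
have mf := @meas_f _ _ hf.
pose h1 x := q1 x * f (pt x / q1 x).
pose h2 x := q2 x * f (pt x / q2 x).
have mh1 : measurable_fun setT h1 by exact: meas_h.
have mh2 : measurable_fun setT h2 by exact: meas_h.
have albe : g^-1 / b < g / a.
  apply: (le_lt_trans (y := g^-1 / a)).
    by rewrite ler_pM2l // lef_pV2 // posrE; lra.
  by rewrite ltr_pM2r ?invr_gt0 //; lra.
have [M hM] := @fbound _ _ hf _ _ (divr_gt0 gi0 (lt_le_trans a0 ab)) albe.
have hB x z : a <= z <= b -> `|z * f (pt x / z)| <= b * M.
  move=> hz; rewrite normrM; apply: ler_pM => //.
    by rewrite ger0_norm; have := hz; lra.
  by apply: hM; apply: div_bnd => //; exact: ptb.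
have [d hd] := @subgrad _ _ hf r r0.
pose c := f r - d * r.
have pw x : h1 x - c * q1 x <= h2 x - c * q2 x.
  exact: (@core _ _ hf r a b (pt x) (q2 x) d r0 a0 ab (pt0 x) (q2b x) hd).
have aeq x : g^-1 <= p x <= g -> pt x = p x by move=> hx; rewrite /pt clip_id.
have ae1 : ae_eq P0 setT (fun x => fdiv_integrand f (p x) (clip (p x / r) a b)) (EFin \o h1).
  apply: filterS hae => x hx _.
  have hp0 : 0 < p x by case/andP: (hx) => hx1 _; lra.
  have := q10 x; rewrite /q1 (aeq x hx) => hq.
  by rewrite /fdiv_integrand hq hp0 /= /h1 /q1 (aeq x hx).
have ae2 : ae_eq P0 setT (fun x => fdiv_integrand f (p x) (lam * p x + (1 - lam))) (EFin \o h2).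
  apply: filterS hae => x hx _.
  have hp0 : 0 < p x by case/andP: (hx) => hx1 _; lra.
  have := q20 x; rewrite /q2 (aeq x hx) => hq.
  by rewrite /fdiv_integrand hq hp0 /= /h2 /q2 (aeq x hx).
have mG1 : measurable_fun setT (fun x => fdiv_integrand f (p x) (clip (p x / r) a b)).
  apply: meas_G => //; apply: meas_clip; apply: measurable_funM => //; exact: measurable_cst.
have mG2 : measurable_fun setT (fun x => fdiv_integrand f (p x) (lam * p x + (1 - lam))).
  apply: meas_G => //; apply: measurable_funD; last exact: measurable_cst.
  by apply: measurable_funM => //; exact: measurable_cst.
rewrite (ae_eq_integral (EFin \o h1)) //; last by apply/measurable_EFinP.
rewrite [leRHS](ae_eq_integral (EFin \o h2)) //; last by apply/measurable_EFinP.
have int1 : P0.-integrable setT (EFin \o h1).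
  by apply: (@int_bnd _ _ _ _ _ (b * M)) => // x; exact: hB.
have int2 : P0.-integrable setT (EFin \o h2).
  by apply: (@int_bnd _ _ _ _ _ (b * M)) => // x; exact: hB.
have intq1 : P0.-integrable setT (EFin \o q1).
  apply: (@int_bnd _ _ _ _ _ (b)) => // x; rewrite ger0_norm; have := q1b x; lra.
have intq2 : P0.-integrable setT (EFin \o q2).
  apply: (@int_bnd _ _ _ _ _ (b)) => // x; rewrite ger0_norm; have := q2b x; lra.
have intpt : P0.-integrable setT (EFin \o pt).
  apply: (@int_bnd _ _ _ _ _ (g)) => // x; rewrite ger0_norm; have := ptb x; lra.
have eq1 : (\int[P0]_x (q1 x)%:E = 1)%E.
  rewrite -hint; apply: ae_eq_integral => //.
  - exact/measurable_EFinP.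
  - by apply/measurable_EFinP; apply: meas_clip; apply: measurable_funM => //; exact: measurable_cst.
  - by apply: filterS hae => x hx _; rewrite /q1 (aeq x hx).
have eqpt : (\int[P0]_x (pt x)%:E = 1)%E.
  rewrite -(probability_setT P) (hP _ measurableT).
  apply: ae_eq_integral => //.
  - exact/measurable_EFinP.
  - exact/measurable_EFinP.
  - by apply: filterS hae => x hx _; rewrite /= (aeq x hx).
have eq2 : (\int[P0]_x (q2 x)%:E = 1)%E.
  rewrite (eq_integral (fun x => (lam%:E * (pt x)%:E) + (cst (1 - lam)%:E) x))%E; last first.
    by move=> x _; rewrite /q2 /= EFinD EFinM.
  rewrite integralD //.
  - rewrite integralZl // eqpt integral_cst //.
    transitivity (lam%:E * 1 + (1 - lam)%:E * 1)%E; last by rewrite !mule1 -EFinD addrCA subrr addr0.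
    by congr (_ + _ * _)%E; exact: probability_setT.
  - exact: (integrableZl measurableT lam intpt).
  - by apply: (@int_bnd _ _ _ _ (cst (1 - lam)) `|1 - lam|) => //; exact: measurable_cst.
pose k x := h2 x + c * (q1 x - q2 x).
have mk : measurable_fun setT k.
  apply: measurable_funD => //; apply: measurable_funM; first exact: measurable_cst.
  exact: measurable_funB.
have intc : P0.-integrable setT (fun x => (c * (q1 x - q2 x))%:E).
  apply: (@int_bnd _ _ _ _ (fun x => c * (q1 x - q2 x)) (`|c| * (2 * b))) => //.
    by apply: measurable_funM; [exact: measurable_cst | exact: measurable_funB].
  move=> x; rewrite normrM ler_wpM2l //.
  have := q1b x; have := q2b x; move=> /andP[u1 u2] /andP[v1 v2].
  rewrite ler_norml; apply/andP; split; lra.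
have intk : P0.-integrable setT (EFin \o k).
  apply: (@int_bnd _ _ _ _ _ (b * M + `|c| * (2 * b))) => // x.
  rewrite /k; apply: (le_trans (ler_normD _ _)); apply: lerD; first exact: hB.
  rewrite normrM ler_wpM2l //.
  have := q1b x; have := q2b x; move=> /andP[u1 u2] /andP[v1 v2].
  rewrite ler_norml; apply/andP; split; lra.
apply: (@le_trans _ _ (\int[P0]_x (EFin \o k) x)%E).
  apply: le_integral => // x _; rewrite /= lee_fin /k.
  have := pw x; lra.
rewrite [leLHS](eq_integral (fun x => (h2 x)%:E + (c * (q1 x - q2 x))%:E))%E; last first.
  by move=> x _.
rewrite integralD //.
rewrite [X in (_ + X <= _)%E](eq_integral (fun x => c%:E * ((q1 x)%:E - (q2 x)%:E)))%E; last first.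
  by move=> x _; rewrite EFinM EFinB.
rewrite integralZl //; last first.
  apply: (@int_bnd _ _ _ _ (fun x => q1 x - q2 x) (2 * b)) => //.
    exact: measurable_funB.
  move=> x; have := q1b x; have := q2b x; move=> /andP[u1 u2] /andP[v1 v2].
  rewrite ler_norml; apply/andP; split; lra.
by rewrite integralB_EFin // eq1 eq2 subee // mule0 adde0.
Qed.
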